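(* Let $\alpha_1,\dots,\alpha_n$ be real numbers and $\omega\in S_n$ with $\alpha_{\omega(1)}\le\alpha_{\omega(2)}\le\dots\le\alpha_{\omega(n)}$. Fix $k\in\{1,\dots,n-1\}$ with $\alpha_{\omega(k)}<\alpha_{\omega(k+1)}$ and let $b,c$ be real numbers with $\alpha_{\omega(k)}<c<b<\alpha_{\omega(k+1)}$ and $f(b)=f(c)$, where $f(t)=(t-\alpha_1)\cdots(t-\alpha_n)$. Put $B_j=\frac{b-\alpha_j}{c-\alpha_j}$ for $j=1,\dots,n$. Then $$B_{\omega(k+1)}\le B_{\omega(k+2)}\le\dots\le B_{\omega(n)}<1<B_{\omega(1)}\le B_{\omega(2)}\le\dots\le B_{\omega(k)}.$$ *)

(* Defs.v *)
From mathcomp Require Import all_boot all_order all_algebra all_fingroup.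
Set Implicit Arguments. Unset Strict Implicit. Unset Printing Implicit Defensive.
Import Order.TTheory GRing.Theory Num.Theory.
Local Open Scope ring_scope.

Definition poly_f (R : realFieldType) (n : nat) (alpha : 'I_n -> R) (t : R) : R :=
  \prod_(i < n) (t - alpha i).

Definition Bq (R : realFieldType) (n : nat) (alpha : 'I_n -> R) (b c : R) (j : 'I_n) : R :=
  (b - alpha j) / (c - alpha j).

(* Main.v *)
Require Import Defs.
From mathcomp Require Import all_boot all_order all_algebra all_fingroup.
From mathcomp Require Import ring lra.
Import Order.TTheory GRing.Theory Num.Theory.
Local Open Scope ring_scope.

Lemma nz (R : realFieldType) (x : R) : (0 < x \/ x < 0) -> x != 0.
Proof. by case=> H; [apply: lt0r_neq0 | apply: ltr0_neq0]. Qed.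

Lemma Bmono (R : realFieldType) (a1 a2 b c : R) : c < b -> a1 <= a2 ->
  (a2 < c \/ b < a1) -> (b - a1) / (c - a1) <= (b - a2) / (c - a2).
Proof.
move=> hcb h12 hcase.
have [h1 h2] : c - a1 != 0 /\ c - a2 != 0.
  by case: hcase => H; (split; apply: nz); [left|left|right|right]; lra.
have e : (b - a1) / (c - a1) - (b - a2) / (c - a2)
   = ((b - c) * (a1 - a2)) / ((c - a1) * (c - a2)) by field; rewrite h1 h2.
rewrite -subr_le0 e.
apply: mulr_le0_ge0.
  by apply: mulr_ge0_le0; lra.
rewrite invr_ge0; case: hcase => H.
  by apply: mulr_ge0; lra.
have -> : (c - a1) * (c - a2) = (a1 - c) * (a2 - c) by ring.
by apply: mulr_ge0; lra.
Qed.

Lemma Blt1 (R : realFieldType) (a b c : R) : c < b -> b < a -> (b - a) / (c - a) < 1.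
Proof.
move=> hcb hba.
have h : a - c != 0 by apply: nz; left; lra.
have -> : (b - a) / (c - a) = 1 - (b - c) / (a - c).
  have h' : c - a != 0 by apply: nz; right; lra.
  by field; rewrite ?h ?h'.
rewrite ltrBlDr ltrDl; apply: divr_gt0; lra.
Qed.

Lemma Bgt1 (R : realFieldType) (a b c : R) : c < b -> a < c -> 1 < (b - a) / (c - a).
Proof.
move=> hcb hac.
have h : c - a != 0 by apply: nz; left; lra.
have -> : (b - a) / (c - a) = 1 + (b - c) / (c - a) by field; rewrite ?h.
rewrite ltrDl; apply: divr_gt0; lra.
Qed.

Theorem lemma8p1 (R : realFieldType) (n : nat) (alpha : 'I_n -> R) (w : 'S_n)
  (k : nat) (hk1 : (1 <= k)%N) (hkn : (k < n)%N) (b c : R) :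
  (forall i j : 'I_n, (i <= j)%N -> alpha (w i) <= alpha (w j)) ->
  (forall i j : 'I_n, i.+1 = k -> j = k :> nat ->
     alpha (w i) < c /\ c < b /\ b < alpha (w j)) ->
  poly_f alpha b = poly_f alpha c ->
  [/\ (forall i j : 'I_n, (k <= i)%N -> (i <= j)%N ->
         Bq alpha b c (w i) <= Bq alpha b c (w j)),
      (forall i : 'I_n, i.+1 = n -> Bq alpha b c (w i) < 1),
      (forall i : 'I_n, i = 0%N :> nat -> 1 < Bq alpha b c (w i))
    & (forall i j : 'I_n, (i <= j)%N -> (j < k)%N ->
         Bq alpha b c (w i) <= Bq alpha b c (w j))].
Proof.
move=> hmon hgap _.
have hk1n : (k.-1 < n)%N by rewrite (leq_ltn_trans (leq_pred k) hkn).
pose i0 := Ordinal hk1n; pose j0 := Ordinal hkn.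
have [ha [hcb hb]] := hgap i0 j0 (prednK hk1) erefl.
have hhi : forall i : 'I_n, (k <= i)%N -> b < alpha (w i).
  move=> i hi; apply: (lt_le_trans hb); exact: hmon.
have hlo : forall i : 'I_n, (i < k)%N -> alpha (w i) < c.
  move=> i hi; apply: le_lt_trans ha; apply: hmon => /=.
  by rewrite -ltnS prednK.
split.
- move=> i j hi hij; rewrite /Bq; apply: Bmono => //; first exact: hmon.
  by right; apply: hhi.
- move=> i hi; rewrite /Bq; apply: Blt1 => //; apply: hhi.
  by rewrite -ltnS hi.
- move=> i hi; rewrite /Bq; apply: Bgt1 => //; apply: hlo.
  by rewrite hi.
- move=> i j hij hj; rewrite /Bq; apply: Bmono => //; first exact: hmon.
  by left; apply: hlo.
Qed.
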